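(* The variety of superintegrable systems $\mathcal V\subset\mathbb P^9$ is, as a set, the union of the following six classes of points. For a point, write $(D,A_z,B_w)$ for its associated polynomials; parameters below are complex numbers, and the point is the one whose $(D,A_z,B_w)$ are as listed (provided not all $a_{ij}$ vanish). (1) $\mathring{\mathcal V}_{(1,1,1)}$: either $D=(a_1z+c_1)(a_2z+b_2w+c_2)(b_3w+c_3)$ with $a_1b_2c_3-a_1c_2b_3+c_1a_2b_3=0$, $a_1\neq0$, $b_3\neq0$, $A_z=a_1a_2(b_3w+c_3)^2/b_3$, $B_w=b_2b_3(a_1z+c_1)^2/a_1$; or $D=a_2z+b_2w+c_2$ with $a_2\ne0\ne b_2$, $A_z=-a_2^2/b_2$, $B_w=-b_2^2/a_2$. (2) $\mathring{\mathcal V}_{(11,0,1)}$: $D=(a_1z+c_1)(a_2z+c_2)(b_3w+c_3)$ with $b_3\neq0$, $A_z=a_1a_2(b_3w+c_3)^2/b_3$, $B_w=0$. (3) $\mathcal V_{(11,0,0)}$: $D=(a_1z+c_1)(a_2z+c_2)$, $A_z=2a_1a_2w+t$ with $t$ arbitrary, $B_w=0$. (4) $\mathring{\mathcal V}_{(0,11,0)}$: $D=(a_1z+b_1w+c_1)(a_3z+b_3w+c_3)$ with $a_1b_3+b_1a_3=0$, $a_1a_3b_1b_3\neq0$, $A_z=a_1a_3(2w+c_3/b_3+c_1/b_1)$, $B_w=b_1b_3(2z+c_3/a_3+c_1/a_1)$. (5) $\mathring{\mathcal V}_{(1,0,11)}$ and (6) $\mathcal V_{(0,0,11)}$: the images of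 classes (2) and (3), respectively, under conjugation $a_{ij}\mapsto a_{ji}$ (equivalently, exchanging $z\leftrightarrow w$ and $A_z\leftrightarrow B_w$).
   Context: Homogeneous coordinates $a_{ij}$ ($i,j\ge0$, $i+j\le3$) on $\mathbb P^9$. Associated polynomials: $D(z,w)=\sum_{0\le i,j\le2,(i,j)\ne(2,2)}a_{ij}z^iw^j$, $A_z(w)=a_{21}w^2+2a_{20}w+a_{30}$, $B_w(z)=a_{12}z^2+2a_{02}z+a_{03}$ (names of polynomials; subscripts on $D$ denote partial derivatives). The variety of superintegrable systems $\mathcal V$ is the set of points satisfying the Plücker relations $a_{03}a_{21}-a_{02}a_{11}+a_{01}a_{12}=0$, $a_{03}a_{20}-a_{02}a_{10}+a_{00}a_{12}=0$, $a_{03}a_{30}-a_{01}a_{10}+a_{00}a_{11}=0$, $a_{02}a_{30}-a_{01}a_{20}+a_{00}a_{21}=0$, $a_{12}a_{30}-a_{11}a_{20}+a_{10}a_{21}=0$ and the superintegrability conditions, i.e. the polynomial identities in $z,w$: $3A_zDD_{ww}-2A_zB_wD_z-2A_zD_w^2+DD_wD_{zz}=0$, $3B_wDD_{zz}-2A_zB_wD_w-2B_wD_z^2+DD_zD_{ww}=0$, $2D^2D_{zz}D_{ww}-B_wDD_zD_{zz}-A_zDD_wD_{ww}-A_zB_wD_zD_w+A_z^2B_w^2=0$. *)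

(* Defs.v *)
From HB Require Import structures.
From mathcomp Require Import all_boot all_order all_algebra.
From mathcomp Require Import reals.
From mathcomp.real_closed Require Import complex.
Set Implicit Arguments.
Unset Strict Implicit.
Unset Printing Implicit Defensive.
Import Order.TTheory GRing.Theory Num.Theory.
Local Open Scope ring_scope.

(* Homogeneous coordinates a_ij (i,j >= 0, i+j <= 3) of a point of P^9,
   given by a representative vector in C^10. *)
Record coords (C : Type) := Coords {
  a00 : C; a01 : C; a02 : C; a03 : C;
  a10 : C; a11 : C; a12 : C;
  a20 : C; a21 : C;
  a30 : C }.

Section Bivariate.
Variable C : fieldType.

(* Bivariate polynomials in z (outer variable) and w (inner variable). *)
Definition bipoly := {poly {poly C}}.
Definition Zv : bipoly := 'X.
Definition Wv : bipoly := polyC 'X.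
Definition cst (c : C) : bipoly := polyC (polyC c).

Definition dz (p : bipoly) : bipoly := deriv p.
Definition dw (p : bipoly) : bipoly := map_poly (@deriv C) p.

Definition nonzero_coords (a : coords C) : Prop :=
  ~ (a00 a = 0 /\ a01 a = 0 /\ a02 a = 0 /\ a03 a = 0 /\ a10 a = 0 /\
     a11 a = 0 /\ a12 a = 0 /\ a20 a = 0 /\ a21 a = 0 /\ a30 a = 0).

Definition Dpol (a : coords C) : bipoly :=
    cst (a00 a) + cst (a01 a) * Wv + cst (a02 a) * Wv ^+ 2
  + cst (a10 a) * Zv + cst (a11 a) * Zv * Wv + cst (a12 a) * Zv * Wv ^+ 2
  + cst (a20 a) * Zv ^+ 2 + cst (a21 a) * Zv ^+ 2 * Wv.

Definition Apol (a : coords C) : bipoly :=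
  cst (a21 a) * Wv ^+ 2 + 2%:R * cst (a20 a) * Wv + cst (a30 a).

Definition Bpol (a : coords C) : bipoly :=
  cst (a12 a) * Zv ^+ 2 + 2%:R * cst (a02 a) * Zv + cst (a03 a).

Definition conj_coords (a : coords C) : coords C :=
  Coords (a00 a) (a10 a) (a20 a) (a30 a) (a01 a) (a11 a) (a21 a)
         (a02 a) (a12 a) (a03 a).

Definition plucker (a : coords C) : Prop :=
  [/\ a03 a * a21 a - a02 a * a11 a + a01 a * a12 a = 0,
      a03 a * a20 a - a02 a * a10 a + a00 a * a12 a = 0,
      a03 a * a30 a - a01 a * a10 a + a00 a * a11 a = 0,
      a02 a * a30 a - a01 a * a20 a + a00 a * a21 a = 0 &
      a12 a * a30 a - a11 a * a20 a + a10 a * a21 a = 0].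

Definition superint (a : coords C) : Prop :=
  let D := Dpol a in let A := Apol a in let B := Bpol a in
  let Dz := dz D in let Dw := dw D in
  let Dzz := dz (dz D) in let Dww := dw (dw D) in
  [/\ 3%:R * A * D * Dww - 2%:R * A * B * Dz - 2%:R * A * Dw ^+ 2
        + D * Dw * Dzz = 0,
      3%:R * B * D * Dzz - 2%:R * A * B * Dw - 2%:R * B * Dz ^+ 2
        + D * Dz * Dww = 0 &
      2%:R * D ^+ 2 * Dzz * Dww - B * D * Dz * Dzz - A * D * Dw * Dww
        - A * B * Dz * Dw + A ^+ 2 * B ^+ 2 = 0].

(* The variety of superintegrable systems (affine cone over V in P^9). *)
Definition in_V (a : coords C) : Prop := plucker a /\ superint a.

Definition has_DAB (a : coords C) (D A B : bipoly) : Prop :=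
  [/\ Dpol a = D, Apol a = A & Bpol a = B].

Definition class_111 (a : coords C) : Prop :=
  (exists a1 c1 a2 b2 c2 b3 c3 : C,
     [/\ a1 * b2 * c3 - a1 * c2 * b3 + c1 * a2 * b3 = 0, a1 != 0, b3 != 0 &
      has_DAB a
        ((cst a1 * Zv + cst c1) * (cst a2 * Zv + cst b2 * Wv + cst c2)
           * (cst b3 * Wv + cst c3))
        (cst (a1 * a2 / b3) * (cst b3 * Wv + cst c3) ^+ 2)
        (cst (b2 * b3 / a1) * (cst a1 * Zv + cst c1) ^+ 2)])
  \/
  (exists a2 b2 c2 : C,
     [/\ a2 != 0, b2 != 0 &
      has_DAB a (cst a2 * Zv + cst b2 * Wv + cst c2)
        (cst (- (a2 ^+ 2 / b2))) (cst (- (b2 ^+ 2 / a2)))]).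

Definition class_11_0_1 (a : coords C) : Prop :=
  exists a1 c1 a2 c2 b3 c3 : C,
    b3 != 0 /\
    has_DAB a
      ((cst a1 * Zv + cst c1) * (cst a2 * Zv + cst c2) * (cst b3 * Wv + cst c3))
      (cst (a1 * a2 / b3) * (cst b3 * Wv + cst c3) ^+ 2)
      0.

Definition class_11_0_0 (a : coords C) : Prop :=
  exists a1 c1 a2 c2 t : C,
    has_DAB a ((cst a1 * Zv + cst c1) * (cst a2 * Zv + cst c2))
      (cst (2%:R * a1 * a2) * Wv + cst t) 0.

Definition class_0_11_0 (a : coords C) : Prop :=
  exists a1 b1 c1 a3 b3 c3 : C,
    [/\ a1 * b3 + b1 * a3 = 0, a1 * a3 * b1 * b3 != 0 &
     has_DAB a
       ((cst a1 * Zv + cst b1 * Wv + cst c1) * (cst a3 * Zv + cst b3 * Wv + cst c3))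
       (cst (a1 * a3) * (cst 2%:R * Wv + cst (c3 / b3 + c1 / b1)))
       (cst (b1 * b3) * (cst 2%:R * Zv + cst (c3 / a3 + c1 / a1)))].

Definition class_1_0_11 (a : coords C) : Prop := class_11_0_1 (conj_coords a).
Definition class_0_0_11 (a : coords C) : Prop := class_11_0_0 (conj_coords a).

End Bivariate.

(* Main.v *)
Require Import Defs.
From HB Require Import structures.
From mathcomp Require Import all_boot all_order all_algebra.
From mathcomp Require Import reals ring.
From mathcomp.real_closed Require Import complex.
Import GRing.Theory Num.Theory.
Set Implicit Arguments.
Unset Strict Implicit.
Local Open Scope ring_scope.

Definition cmap (S S' : Type) (f : S -> S') (a : coords S) : coords S' :=
  Coords (f (a00 a)) (f (a01 a)) (f (a02 a)) (f (a03 a)) (f (a10 a))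
         (f (a11 a)) (f (a12 a)) (f (a20 a)) (f (a21 a)) (f (a30 a)).

Section Generic.
Variable S : comNzRingType.
Definition Dg (a : coords S) (z w : S) : S := ((a00 a)) + ((a01 a) * w) + ((a02 a) * w ^+ 2) + ((a10 a) * z) + ((a11 a) * z * w) + ((a12 a) * z * w ^+ 2) + ((a20 a) * z ^+ 2) + ((a21 a) * z ^+ 2 * w).
Definition Ag (a : coords S) (z w : S) : S := (2%:R * (a20 a) * w) + ((a21 a) * w ^+ 2) + ((a30 a)).
Definition Bg (a : coords S) (z w : S) : S := (2%:R * (a02 a) * z) + ((a03 a)) + ((a12 a) * z ^+ 2).
Definition Dzg (a : coords S) (z w : S) : S := ((a10 a)) + ((a11 a) * w) + ((a12 a) * w ^+ 2) + (2%:R * (a20 a) * z) + (2%:R * (a21 a) * z * w).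
Definition Dwg (a : coords S) (z w : S) : S := ((a01 a)) + (2%:R * (a02 a) * w) + ((a11 a) * z) + (2%:R * (a12 a) * z * w) + ((a21 a) * z ^+ 2).
Definition Dzzg (a : coords S) (z w : S) : S := (2%:R * (a20 a)) + (2%:R * (a21 a) * w).
Definition Dwwg (a : coords S) (z w : S) : S := (2%:R * (a02 a)) + (2%:R * (a12 a) * z).
Definition T1 (a : coords S) (i j : nat) : S :=
  match i, j with
  | 0, 0 => (2%:R * (a00 a) * (a01 a) * (a20 a)) + (6%:R * (a00 a) * (a02 a) * (a30 a)) - (2%:R * (a01 a) ^+ 2 * (a30 a)) - (2%:R * (a03 a) * (a10 a) * (a30 a))
  | 0, 1 => (2%:R * (a00 a) * (a01 a) * (a21 a)) + (16%:R * (a00 a) * (a02 a) * (a20 a)) - (2%:R * (a01 a) ^+ 2 * (a20 a)) - (2%:R * (a01 a) * (a02 a) * (a30 a)) - (4%:R * (a03 a) * (a10 a) * (a20 a)) - (2%:R * (a03 a) * (a11 a) * (a30 a))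
  | 0, 2 => (10%:R * (a00 a) * (a02 a) * (a21 a)) + (2%:R * (a01 a) * (a02 a) * (a20 a)) - (2%:R * (a02 a) ^+ 2 * (a30 a)) - (2%:R * (a03 a) * (a10 a) * (a21 a)) - (4%:R * (a03 a) * (a11 a) * (a20 a)) - (2%:R * (a03 a) * (a12 a) * (a30 a))
  | 0, 3 => (4%:R * (a01 a) * (a02 a) * (a21 a)) - (2%:R * (a03 a) * (a11 a) * (a21 a)) - (4%:R * (a03 a) * (a12 a) * (a20 a))
  | 0, 4 => (2%:R * (a02 a) ^+ 2 * (a21 a)) - (2%:R * (a03 a) * (a12 a) * (a21 a))
  | 1, 0 => (2%:R * (a00 a) * (a11 a) * (a20 a)) + (6%:R * (a00 a) * (a12 a) * (a30 a)) + (2%:R * (a01 a) * (a10 a) * (a20 a)) - (4%:R * (a01 a) * (a11 a) * (a30 a)) + (2%:R * (a02 a) * (a10 a) * (a30 a)) - (4%:R * (a03 a) * (a20 a) * (a30 a))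
  | 1, 1 => (2%:R * (a00 a) * (a11 a) * (a21 a)) + (16%:R * (a00 a) * (a12 a) * (a20 a)) + (2%:R * (a01 a) * (a10 a) * (a21 a)) - (4%:R * (a01 a) * (a11 a) * (a20 a)) - (2%:R * (a01 a) * (a12 a) * (a30 a)) + (8%:R * (a02 a) * (a10 a) * (a20 a)) - (6%:R * (a02 a) * (a11 a) * (a30 a)) - (8%:R * (a03 a) * (a20 a) ^+ 2) - (4%:R * (a03 a) * (a21 a) * (a30 a))
  | 1, 2 => (10%:R * (a00 a) * (a12 a) * (a21 a)) + (2%:R * (a01 a) * (a12 a) * (a20 a)) + (6%:R * (a02 a) * (a10 a) * (a21 a)) - (6%:R * (a02 a) * (a11 a) * (a20 a)) - (8%:R * (a02 a) * (a12 a) * (a30 a)) - (12%:R * (a03 a) * (a20 a) * (a21 a))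
  | 1, 3 => (4%:R * (a01 a) * (a12 a) * (a21 a)) - (8%:R * (a02 a) * (a12 a) * (a20 a)) - (4%:R * (a03 a) * (a21 a) ^+ 2)
  | 2, 0 => (2%:R * (a00 a) * (a20 a) * (a21 a)) + (2%:R * (a01 a) * (a20 a) ^+ 2) - (4%:R * (a01 a) * (a21 a) * (a30 a)) - (2%:R * (a02 a) * (a20 a) * (a30 a)) + (2%:R * (a10 a) * (a11 a) * (a20 a)) + (4%:R * (a10 a) * (a12 a) * (a30 a)) - (2%:R * (a11 a) ^+ 2 * (a30 a))
  | 2, 1 => (2%:R * (a00 a) * (a21 a) ^+ 2) - (2%:R * (a01 a) * (a20 a) * (a21 a)) - (10%:R * (a02 a) * (a21 a) * (a30 a)) + (2%:R * (a10 a) * (a11 a) * (a21 a)) + (12%:R * (a10 a) * (a12 a) * (a20 a)) - (2%:R * (a11 a) ^+ 2 * (a20 a)) - (4%:R * (a11 a) * (a12 a) * (a30 a))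
  | 2, 2 => - (12%:R * (a02 a) * (a20 a) * (a21 a)) + (8%:R * (a10 a) * (a12 a) * (a21 a)) - (2%:R * (a11 a) * (a12 a) * (a20 a)) - (4%:R * (a12 a) ^+ 2 * (a30 a))
  | 2, 3 => - (4%:R * (a02 a) * (a21 a) ^+ 2) + (2%:R * (a11 a) * (a12 a) * (a21 a)) - (4%:R * (a12 a) ^+ 2 * (a20 a))
  | 3, 0 => (2%:R * (a10 a) * (a20 a) * (a21 a)) + (2%:R * (a11 a) * (a20 a) ^+ 2) - (4%:R * (a11 a) * (a21 a) * (a30 a)) + (2%:R * (a12 a) * (a20 a) * (a30 a))
  | 3, 1 => (2%:R * (a10 a) * (a21 a) ^+ 2) - (2%:R * (a11 a) * (a20 a) * (a21 a)) + (8%:R * (a12 a) * (a20 a) ^+ 2) - (6%:R * (a12 a) * (a21 a) * (a30 a))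
  | 4, 0 => (2%:R * (a20 a) ^+ 2 * (a21 a)) - (2%:R * (a21 a) ^+ 2 * (a30 a))
  | _, _ => 0 end.
Definition T2 (a : coords S) (i j : nat) : S :=
  match i, j with
  | 0, 0 => (2%:R * (a00 a) * (a02 a) * (a10 a)) + (6%:R * (a00 a) * (a03 a) * (a20 a)) - (2%:R * (a01 a) * (a03 a) * (a30 a)) - (2%:R * (a03 a) * (a10 a) ^+ 2)
  | 0, 1 => (2%:R * (a00 a) * (a02 a) * (a11 a)) + (6%:R * (a00 a) * (a03 a) * (a21 a)) + (2%:R * (a01 a) * (a02 a) * (a10 a)) + (2%:R * (a01 a) * (a03 a) * (a20 a)) - (4%:R * (a02 a) * (a03 a) * (a30 a)) - (4%:R * (a03 a) * (a10 a) * (a11 a))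
  | 0, 2 => (2%:R * (a00 a) * (a02 a) * (a12 a)) + (2%:R * (a01 a) * (a02 a) * (a11 a)) + (4%:R * (a01 a) * (a03 a) * (a21 a)) + (2%:R * (a02 a) ^+ 2 * (a10 a)) - (2%:R * (a02 a) * (a03 a) * (a20 a)) - (4%:R * (a03 a) * (a10 a) * (a12 a)) - (2%:R * (a03 a) * (a11 a) ^+ 2)
  | 0, 3 => (2%:R * (a01 a) * (a02 a) * (a12 a)) + (2%:R * (a02 a) ^+ 2 * (a11 a)) + (2%:R * (a02 a) * (a03 a) * (a21 a)) - (4%:R * (a03 a) * (a11 a) * (a12 a))
  | 0, 4 => (2%:R * (a02 a) ^+ 2 * (a12 a)) - (2%:R * (a03 a) * (a12 a) ^+ 2)
  | 1, 0 => (16%:R * (a00 a) * (a02 a) * (a20 a)) + (2%:R * (a00 a) * (a10 a) * (a12 a)) - (4%:R * (a01 a) * (a02 a) * (a30 a)) - (2%:R * (a02 a) * (a10 a) ^+ 2) - (2%:R * (a03 a) * (a10 a) * (a20 a)) - (2%:R * (a03 a) * (a11 a) * (a30 a))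
  | 1, 1 => (16%:R * (a00 a) * (a02 a) * (a21 a)) + (2%:R * (a00 a) * (a11 a) * (a12 a)) + (8%:R * (a01 a) * (a02 a) * (a20 a)) + (2%:R * (a01 a) * (a10 a) * (a12 a)) - (8%:R * (a02 a) ^+ 2 * (a30 a)) - (4%:R * (a02 a) * (a10 a) * (a11 a)) - (2%:R * (a03 a) * (a10 a) * (a21 a)) - (6%:R * (a03 a) * (a11 a) * (a20 a)) - (4%:R * (a03 a) * (a12 a) * (a30 a))
  | 1, 2 => (2%:R * (a00 a) * (a12 a) ^+ 2) + (12%:R * (a01 a) * (a02 a) * (a21 a)) + (2%:R * (a01 a) * (a11 a) * (a12 a)) - (2%:R * (a02 a) * (a10 a) * (a12 a)) - (2%:R * (a02 a) * (a11 a) ^+ 2) - (4%:R * (a03 a) * (a11 a) * (a21 a)) - (10%:R * (a03 a) * (a12 a) * (a20 a))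
  | 1, 3 => (2%:R * (a01 a) * (a12 a) ^+ 2) + (8%:R * (a02 a) ^+ 2 * (a21 a)) - (2%:R * (a02 a) * (a11 a) * (a12 a)) - (6%:R * (a03 a) * (a12 a) * (a21 a))
  | 2, 0 => (10%:R * (a00 a) * (a12 a) * (a20 a)) - (2%:R * (a01 a) * (a12 a) * (a30 a)) + (2%:R * (a02 a) * (a10 a) * (a20 a)) - (4%:R * (a02 a) * (a11 a) * (a30 a)) - (2%:R * (a03 a) * (a20 a) ^+ 2) - (2%:R * (a03 a) * (a21 a) * (a30 a))
  | 2, 1 => (10%:R * (a00 a) * (a12 a) * (a21 a)) + (6%:R * (a01 a) * (a12 a) * (a20 a)) + (2%:R * (a02 a) * (a10 a) * (a21 a)) - (6%:R * (a02 a) * (a11 a) * (a20 a)) - (12%:R * (a02 a) * (a12 a) * (a30 a)) - (8%:R * (a03 a) * (a20 a) * (a21 a))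
  | 2, 2 => (8%:R * (a01 a) * (a12 a) * (a21 a)) - (2%:R * (a02 a) * (a11 a) * (a21 a)) - (12%:R * (a02 a) * (a12 a) * (a20 a)) - (4%:R * (a03 a) * (a21 a) ^+ 2)
  | 3, 0 => - (4%:R * (a02 a) * (a21 a) * (a30 a)) + (4%:R * (a10 a) * (a12 a) * (a20 a)) - (2%:R * (a11 a) * (a12 a) * (a30 a))
  | 3, 1 => - (8%:R * (a02 a) * (a20 a) * (a21 a)) + (4%:R * (a10 a) * (a12 a) * (a21 a)) - (4%:R * (a12 a) ^+ 2 * (a30 a))
  | 3, 2 => - (4%:R * (a02 a) * (a21 a) ^+ 2) + (2%:R * (a11 a) * (a12 a) * (a21 a)) - (4%:R * (a12 a) ^+ 2 * (a20 a))
  | 4, 0 => (2%:R * (a12 a) * (a20 a) ^+ 2) - (2%:R * (a12 a) * (a21 a) * (a30 a))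
  | _, _ => 0 end.
Definition T3 (a : coords S) (i j : nat) : S :=
  match i, j with
  | 0, 0 => (8%:R * (a00 a) ^+ 2 * (a02 a) * (a20 a)) - (2%:R * (a00 a) * (a01 a) * (a02 a) * (a30 a)) - (2%:R * (a00 a) * (a03 a) * (a10 a) * (a20 a)) - ((a01 a) * (a03 a) * (a10 a) * (a30 a)) + ((a03 a) ^+ 2 * (a30 a) ^+ 2)
  | 0, 1 => (8%:R * (a00 a) ^+ 2 * (a02 a) * (a21 a)) + (12%:R * (a00 a) * (a01 a) * (a02 a) * (a20 a)) - (4%:R * (a00 a) * (a02 a) ^+ 2 * (a30 a)) - (2%:R * (a00 a) * (a03 a) * (a10 a) * (a21 a)) - (2%:R * (a00 a) * (a03 a) * (a11 a) * (a20 a)) - (2%:R * (a01 a) ^+ 2 * (a02 a) * (a30 a)) - (4%:R * (a01 a) * (a03 a) * (a10 a) * (a20 a)) - ((a01 a) * (a03 a) * (a11 a) * (a30 a)) - (2%:R * (a02 a) * (a03 a) * (a10 a) * (a30 a)) + (4%:R * (a03 a) ^+ 2 * (a20 a) * (a30 a))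
  | 0, 2 => (14%:R * (a00 a) * (a01 a) * (a02 a) * (a21 a)) + (8%:R * (a00 a) * (a02 a) ^+ 2 * (a20 a)) - (2%:R * (a00 a) * (a03 a) * (a11 a) * (a21 a)) - (2%:R * (a00 a) * (a03 a) * (a12 a) * (a20 a)) + (4%:R * (a01 a) ^+ 2 * (a02 a) * (a20 a)) - (6%:R * (a01 a) * (a02 a) ^+ 2 * (a30 a)) - (3%:R * (a01 a) * (a03 a) * (a10 a) * (a21 a)) - (4%:R * (a01 a) * (a03 a) * (a11 a) * (a20 a)) - ((a01 a) * (a03 a) * (a12 a) * (a30 a)) - (6%:R * (a02 a) * (a03 a) * (a10 a) * (a20 a)) - (2%:R * (a02 a) * (a03 a) * (a11 a) * (a30 a)) + (4%:R * (a03 a) ^+ 2 * (a20 a) ^+ 2) + (2%:R * (a03 a) ^+ 2 * (a21 a) * (a30 a))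
  | 0, 3 => (12%:R * (a00 a) * (a02 a) ^+ 2 * (a21 a)) - (2%:R * (a00 a) * (a03 a) * (a12 a) * (a21 a)) + (6%:R * (a01 a) ^+ 2 * (a02 a) * (a21 a)) + (4%:R * (a01 a) * (a02 a) ^+ 2 * (a20 a)) - (3%:R * (a01 a) * (a03 a) * (a11 a) * (a21 a)) - (4%:R * (a01 a) * (a03 a) * (a12 a) * (a20 a)) - (4%:R * (a02 a) ^+ 3 * (a30 a)) - (4%:R * (a02 a) * (a03 a) * (a10 a) * (a21 a)) - (6%:R * (a02 a) * (a03 a) * (a11 a) * (a20 a)) - (2%:R * (a02 a) * (a03 a) * (a12 a) * (a30 a)) + (4%:R * (a03 a) ^+ 2 * (a20 a) * (a21 a))
  | 0, 4 => (10%:R * (a01 a) * (a02 a) ^+ 2 * (a21 a)) - (3%:R * (a01 a) * (a03 a) * (a12 a) * (a21 a)) - (4%:R * (a02 a) * (a03 a) * (a11 a) * (a21 a)) - (6%:R * (a02 a) * (a03 a) * (a12 a) * (a20 a)) + ((a03 a) ^+ 2 * (a21 a) ^+ 2)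
  | 0, 5 => (4%:R * (a02 a) ^+ 3 * (a21 a)) - (4%:R * (a02 a) * (a03 a) * (a12 a) * (a21 a))
  | 1, 0 => (8%:R * (a00 a) ^+ 2 * (a12 a) * (a20 a)) - (2%:R * (a00 a) * (a01 a) * (a12 a) * (a30 a)) + (12%:R * (a00 a) * (a02 a) * (a10 a) * (a20 a)) - (2%:R * (a00 a) * (a02 a) * (a11 a) * (a30 a)) - (4%:R * (a00 a) * (a03 a) * (a20 a) ^+ 2) - (4%:R * (a01 a) * (a02 a) * (a10 a) * (a30 a)) - (2%:R * (a01 a) * (a03 a) * (a20 a) * (a30 a)) + (4%:R * (a02 a) * (a03 a) * (a30 a) ^+ 2) - (2%:R * (a03 a) * (a10 a) ^+ 2 * (a20 a)) - ((a03 a) * (a10 a) * (a11 a) * (a30 a))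
  | 1, 1 => (8%:R * (a00 a) ^+ 2 * (a12 a) * (a21 a)) + (12%:R * (a00 a) * (a01 a) * (a12 a) * (a20 a)) + (12%:R * (a00 a) * (a02 a) * (a10 a) * (a21 a)) + (8%:R * (a00 a) * (a02 a) * (a11 a) * (a20 a)) - (8%:R * (a00 a) * (a02 a) * (a12 a) * (a30 a)) - (8%:R * (a00 a) * (a03 a) * (a20 a) * (a21 a)) - (2%:R * (a01 a) ^+ 2 * (a12 a) * (a30 a)) + (4%:R * (a01 a) * (a02 a) * (a10 a) * (a20 a)) - (6%:R * (a01 a) * (a02 a) * (a11 a) * (a30 a)) - (8%:R * (a01 a) * (a03 a) * (a20 a) ^+ 2) - (2%:R * (a01 a) * (a03 a) * (a21 a) * (a30 a)) - (8%:R * (a02 a) ^+ 2 * (a10 a) * (a30 a)) + (12%:R * (a02 a) * (a03 a) * (a20 a) * (a30 a)) - (2%:R * (a03 a) * (a10 a) ^+ 2 * (a21 a)) - (6%:R * (a03 a) * (a10 a) * (a11 a) * (a20 a)) - (2%:R * (a03 a) * (a10 a) * (a12 a) * (a30 a)) - ((a03 a) * (a11 a) ^+ 2 * (a30 a))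
  | 1, 2 => (14%:R * (a00 a) * (a01 a) * (a12 a) * (a21 a)) + (10%:R * (a00 a) * (a02 a) * (a11 a) * (a21 a)) + (12%:R * (a00 a) * (a02 a) * (a12 a) * (a20 a)) - (4%:R * (a00 a) * (a03 a) * (a21 a) ^+ 2) + (4%:R * (a01 a) ^+ 2 * (a12 a) * (a20 a)) + (8%:R * (a01 a) * (a02 a) * (a10 a) * (a21 a)) - (14%:R * (a01 a) * (a02 a) * (a12 a) * (a30 a)) - (14%:R * (a01 a) * (a03 a) * (a20 a) * (a21 a)) - (4%:R * (a02 a) ^+ 2 * (a10 a) * (a20 a)) - (10%:R * (a02 a) ^+ 2 * (a11 a) * (a30 a)) + (4%:R * (a02 a) * (a03 a) * (a20 a) ^+ 2) + (4%:R * (a02 a) * (a03 a) * (a21 a) * (a30 a)) - (5%:R * (a03 a) * (a10 a) * (a11 a) * (a21 a)) - (8%:R * (a03 a) * (a10 a) * (a12 a) * (a20 a)) - (4%:R * (a03 a) * (a11 a) ^+ 2 * (a20 a)) - (3%:R * (a03 a) * (a11 a) * (a12 a) * (a30 a))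
  | 1, 3 => (20%:R * (a00 a) * (a02 a) * (a12 a) * (a21 a)) + (6%:R * (a01 a) ^+ 2 * (a12 a) * (a21 a)) + (6%:R * (a01 a) * (a02 a) * (a11 a) * (a21 a)) - (6%:R * (a01 a) * (a03 a) * (a21 a) ^+ 2) + (4%:R * (a02 a) ^+ 2 * (a10 a) * (a21 a)) - (8%:R * (a02 a) ^+ 2 * (a11 a) * (a20 a)) - (16%:R * (a02 a) ^+ 2 * (a12 a) * (a30 a)) - (4%:R * (a02 a) * (a03 a) * (a20 a) * (a21 a)) - (6%:R * (a03 a) * (a10 a) * (a12 a) * (a21 a)) - (3%:R * (a03 a) * (a11 a) ^+ 2 * (a21 a)) - (10%:R * (a03 a) * (a11 a) * (a12 a) * (a20 a)) - (2%:R * (a03 a) * (a12 a) ^+ 2 * (a30 a))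
  | 1, 4 => (14%:R * (a01 a) * (a02 a) * (a12 a) * (a21 a)) + (2%:R * (a02 a) ^+ 2 * (a11 a) * (a21 a)) - (12%:R * (a02 a) ^+ 2 * (a12 a) * (a20 a)) - (4%:R * (a02 a) * (a03 a) * (a21 a) ^+ 2) - (7%:R * (a03 a) * (a11 a) * (a12 a) * (a21 a)) - (6%:R * (a03 a) * (a12 a) ^+ 2 * (a20 a))
  | 1, 5 => (4%:R * (a02 a) ^+ 2 * (a12 a) * (a21 a)) - (4%:R * (a03 a) * (a12 a) ^+ 2 * (a21 a))
  | 2, 0 => (8%:R * (a00 a) * (a02 a) * (a20 a) ^+ 2) - (2%:R * (a00 a) * (a02 a) * (a21 a) * (a30 a)) + (14%:R * (a00 a) * (a10 a) * (a12 a) * (a20 a)) - (2%:R * (a00 a) * (a11 a) * (a12 a) * (a30 a)) - (6%:R * (a01 a) * (a02 a) * (a20 a) * (a30 a)) - (3%:R * (a01 a) * (a10 a) * (a12 a) * (a30 a)) + (4%:R * (a02 a) ^+ 2 * (a30 a) ^+ 2) + (4%:R * (a02 a) * (a10 a) ^+ 2 * (a20 a)) - (4%:R * (a02 a) * (a10 a) * (a11 a) * (a30 a)) - (6%:R * (a03 a) * (a10 a) * (a20 a) ^+ 2) - ((a03 a) * (a10 a) * (a21 a) * (a30 a)) - (2%:R * (a03 a) * (a11 a) * (a20 a) * (a30 a)) + (2%:R * (a03 a) * (a12 a) * (a30 a) ^+ 2)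
  | 2, 1 => (12%:R * (a00 a) * (a02 a) * (a20 a) * (a21 a)) + (14%:R * (a00 a) * (a10 a) * (a12 a) * (a21 a)) + (10%:R * (a00 a) * (a11 a) * (a12 a) * (a20 a)) - (4%:R * (a00 a) * (a12 a) ^+ 2 * (a30 a)) - (4%:R * (a01 a) * (a02 a) * (a20 a) ^+ 2) - (8%:R * (a01 a) * (a02 a) * (a21 a) * (a30 a)) + (8%:R * (a01 a) * (a10 a) * (a12 a) * (a20 a)) - (5%:R * (a01 a) * (a11 a) * (a12 a) * (a30 a)) + (4%:R * (a02 a) ^+ 2 * (a20 a) * (a30 a)) + (4%:R * (a02 a) * (a10 a) ^+ 2 * (a21 a)) - (14%:R * (a02 a) * (a10 a) * (a12 a) * (a30 a)) - (4%:R * (a02 a) * (a11 a) ^+ 2 * (a30 a)) - (14%:R * (a03 a) * (a10 a) * (a20 a) * (a21 a)) - (10%:R * (a03 a) * (a11 a) * (a20 a) ^+ 2) - (3%:R * (a03 a) * (a11 a) * (a21 a) * (a30 a)) + (4%:R * (a03 a) * (a12 a) * (a20 a) * (a30 a))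
  | 2, 2 => (6%:R * (a00 a) * (a02 a) * (a21 a) ^+ 2) + (12%:R * (a00 a) * (a11 a) * (a12 a) * (a21 a)) + (6%:R * (a00 a) * (a12 a) ^+ 2 * (a20 a)) - (6%:R * (a01 a) * (a02 a) * (a20 a) * (a21 a)) + (11%:R * (a01 a) * (a10 a) * (a12 a) * (a21 a)) + (4%:R * (a01 a) * (a11 a) * (a12 a) * (a20 a)) - (7%:R * (a01 a) * (a12 a) ^+ 2 * (a30 a)) - (6%:R * (a02 a) ^+ 2 * (a21 a) * (a30 a)) + (4%:R * (a02 a) * (a10 a) * (a11 a) * (a21 a)) - (6%:R * (a02 a) * (a10 a) * (a12 a) * (a20 a)) - (4%:R * (a02 a) * (a11 a) ^+ 2 * (a20 a)) - (20%:R * (a02 a) * (a11 a) * (a12 a) * (a30 a)) - (7%:R * (a03 a) * (a10 a) * (a21 a) ^+ 2) - (20%:R * (a03 a) * (a11 a) * (a20 a) * (a21 a)) - (6%:R * (a03 a) * (a12 a) * (a20 a) ^+ 2) - ((a03 a) * (a12 a) * (a21 a) * (a30 a))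
  | 2, 3 => (10%:R * (a00 a) * (a12 a) ^+ 2 * (a21 a)) + (9%:R * (a01 a) * (a11 a) * (a12 a) * (a21 a)) - (8%:R * (a02 a) ^+ 2 * (a20 a) * (a21 a)) + (8%:R * (a02 a) * (a10 a) * (a12 a) * (a21 a)) - (18%:R * (a02 a) * (a11 a) * (a12 a) * (a20 a)) - (18%:R * (a02 a) * (a12 a) ^+ 2 * (a30 a)) - (9%:R * (a03 a) * (a11 a) * (a21 a) ^+ 2) - (18%:R * (a03 a) * (a12 a) * (a20 a) * (a21 a))
  | 2, 4 => (7%:R * (a01 a) * (a12 a) ^+ 2 * (a21 a)) - (2%:R * (a02 a) ^+ 2 * (a21 a) ^+ 2) + (2%:R * (a02 a) * (a11 a) * (a12 a) * (a21 a)) - (18%:R * (a02 a) * (a12 a) ^+ 2 * (a20 a)) - (9%:R * (a03 a) * (a12 a) * (a21 a) ^+ 2)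
  | 3, 0 => (12%:R * (a00 a) * (a12 a) * (a20 a) ^+ 2) - (2%:R * (a00 a) * (a12 a) * (a21 a) * (a30 a)) - (4%:R * (a01 a) * (a12 a) * (a20 a) * (a30 a)) + (4%:R * (a02 a) * (a10 a) * (a20 a) ^+ 2) - (4%:R * (a02 a) * (a10 a) * (a21 a) * (a30 a)) - (6%:R * (a02 a) * (a11 a) * (a20 a) * (a30 a)) + (4%:R * (a02 a) * (a12 a) * (a30 a) ^+ 2) - (4%:R * (a03 a) * (a20 a) ^+ 3) - (2%:R * (a03 a) * (a20 a) * (a21 a) * (a30 a)) + (6%:R * (a10 a) ^+ 2 * (a12 a) * (a20 a)) - (3%:R * (a10 a) * (a11 a) * (a12 a) * (a30 a))
  | 3, 1 => (20%:R * (a00 a) * (a12 a) * (a20 a) * (a21 a)) + (4%:R * (a01 a) * (a12 a) * (a20 a) ^+ 2) - (6%:R * (a01 a) * (a12 a) * (a21 a) * (a30 a)) - (8%:R * (a02 a) * (a11 a) * (a20 a) ^+ 2) - (10%:R * (a02 a) * (a11 a) * (a21 a) * (a30 a)) - (4%:R * (a02 a) * (a12 a) * (a20 a) * (a30 a)) - (16%:R * (a03 a) * (a20 a) ^+ 2 * (a21 a)) - (2%:R * (a03 a) * (a21 a) ^+ 2 * (a30 a)) + (6%:R * (a10 a) ^+ 2 * (a12 a) * (a21 a)) + (6%:R * (a10 a) * (a11 a) * (a12 a) * (a20 a)) - (6%:R * (a10 a) * (a12 a) ^+ 2 * (a30 a)) - (3%:R * (a11 a) ^+ 2 * (a12 a)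 * (a30 a))
  | 3, 2 => (10%:R * (a00 a) * (a12 a) * (a21 a) ^+ 2) + (8%:R * (a01 a) * (a12 a) * (a20 a) * (a21 a)) - (18%:R * (a02 a) * (a11 a) * (a20 a) * (a21 a)) - (8%:R * (a02 a) * (a12 a) * (a20 a) ^+ 2) - (18%:R * (a02 a) * (a12 a) * (a21 a) * (a30 a)) - (18%:R * (a03 a) * (a20 a) * (a21 a) ^+ 2) + (9%:R * (a10 a) * (a11 a) * (a12 a) * (a21 a)) - (9%:R * (a11 a) * (a12 a) ^+ 2 * (a30 a))
  | 3, 3 => (6%:R * (a01 a) * (a12 a) * (a21 a) ^+ 2) - (6%:R * (a02 a) * (a11 a) * (a21 a) ^+ 2) - (24%:R * (a02 a) * (a12 a) * (a20 a) * (a21 a)) - (6%:R * (a03 a) * (a21 a) ^+ 3) + (6%:R * (a10 a) * (a12 a) ^+ 2 * (a21 a)) + (3%:R * (a11 a) ^+ 2 * (a12 a) * (a21 a)) - (6%:R * (a11 a) * (a12 a) ^+ 2 * (a20 a)) - (6%:R * (a12 a) ^+ 3 * (a30 a))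
  | 3, 4 => - (6%:R * (a02 a) * (a12 a) * (a21 a) ^+ 2) + (3%:R * (a11 a) * (a12 a) ^+ 2 * (a21 a)) - (6%:R * (a12 a) ^+ 3 * (a20 a))
  | 4, 0 => - (6%:R * (a02 a) * (a20 a) * (a21 a) * (a30 a)) + (10%:R * (a10 a) * (a12 a) * (a20 a) ^+ 2) - (3%:R * (a10 a) * (a12 a) * (a21 a) * (a30 a)) - (4%:R * (a11 a) * (a12 a) * (a20 a) * (a30 a)) + ((a12 a) ^+ 2 * (a30 a) ^+ 2)
  | 4, 1 => - (12%:R * (a02 a) * (a20 a) ^+ 2 * (a21 a)) - (6%:R * (a02 a) * (a21 a) ^+ 2 * (a30 a)) + (14%:R * (a10 a) * (a12 a) * (a20 a) * (a21 a)) + (2%:R * (a11 a) * (a12 a) * (a20 a) ^+ 2) - (7%:R * (a11 a) * (a12 a) * (a21 a) * (a30 a)) - (4%:R * (a12 a) ^+ 2 * (a20 a) * (a30 a))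
  | 4, 2 => - (18%:R * (a02 a) * (a20 a) * (a21 a) ^+ 2) + (7%:R * (a10 a) * (a12 a) * (a21 a) ^+ 2) + (2%:R * (a11 a) * (a12 a) * (a20 a) * (a21 a)) - (2%:R * (a12 a) ^+ 2 * (a20 a) ^+ 2) - (9%:R * (a12 a) ^+ 2 * (a21 a) * (a30 a))
  | 4, 3 => - (6%:R * (a02 a) * (a21 a) ^+ 3) + (3%:R * (a11 a) * (a12 a) * (a21 a) ^+ 2) - (6%:R * (a12 a) ^+ 2 * (a20 a) * (a21 a))
  | 5, 0 => (4%:R * (a12 a) * (a20 a) ^+ 3) - (4%:R * (a12 a) * (a20 a) * (a21 a) * (a30 a))
  | 5, 1 => (4%:R * (a12 a) * (a20 a) ^+ 2 * (a21 a)) - (4%:R * (a12 a) * (a21 a) ^+ 2 * (a30 a))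
  | _, _ => 0 end.

Lemma E1g_sum a z w :
  3%:R * Ag a z w * Dg a z w * Dwwg a z w - 2%:R * Ag a z w * Bg a z w * Dzg a z w
  - 2%:R * Ag a z w * Dwg a z w ^+ 2 + Dg a z w * Dwg a z w * Dzzg a z w
  = \sum_(i < 6) \sum_(j < 6) T1 a i j * z ^+ i * w ^+ j.
Proof. rewrite !big_ord_recr !big_ord0 /= /Dg /Ag /Bg /Dzg /Dwg /Dzzg /Dwwg. ring. Qed.

Lemma E2g_sum a z w :
  3%:R * Bg a z w * Dg a z w * Dzzg a z w - 2%:R * Ag a z w * Bg a z w * Dwg a z w
  - 2%:R * Bg a z w * Dzg a z w ^+ 2 + Dg a z w * Dzg a z w * Dwwg a z w
  = \sum_(i < 6) \sum_(j < 6) T2 a i j * z ^+ i * w ^+ j.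
Proof. rewrite !big_ord_recr !big_ord0 /= /Dg /Ag /Bg /Dzg /Dwg /Dzzg /Dwwg. ring. Qed.

Lemma E3g_sum a z w :
  2%:R * Dg a z w ^+ 2 * Dzzg a z w * Dwwg a z w - Bg a z w * Dg a z w * Dzg a z w * Dzzg a z w
  - Ag a z w * Dg a z w * Dwg a z w * Dwwg a z w - Ag a z w * Bg a z w * Dzg a z w * Dwg a z w
  + Ag a z w ^+ 2 * Bg a z w ^+ 2
  = \sum_(i < 6) \sum_(j < 6) T3 a i j * z ^+ i * w ^+ j.
Proof. rewrite !big_ord_recr !big_ord0 /= /Dg /Ag /Bg /Dzg /Dwg /Dzzg /Dwwg. ring. Qed.

End Generic.


Lemma poly0_of_roots (R : idomainType) (p : {poly R}) (f : nat -> R) :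
  injective f -> (forall n, p.[f n] = 0) -> p = 0.
Proof.
move=> finj h; apply/eqP; apply: contraT => nz.
have := max_poly_roots nz (rs := map f (iota 0 (size p))).
rewrite size_map size_iota ltnn; apply.
  by apply/allP => x /mapP [n _ ->]; rewrite /root h.
by rewrite map_inj_uniq // iota_uniq.
Qed.

Section Bi.
Variable C : numClosedFieldType.
Implicit Types (a : coords C) (z w : C).

Definition ev z w : {rmorphism bipoly C -> C} := horner_eval w \o horner_eval z%:P.

Lemma evE z w p : ev z w p = (p.[z%:P]).[w]. Proof. by []. Qed.
Lemma ev_cst z w c : ev z w (cst c) = c. Proof. by rewrite evE /cst !hornerC. Qed.
Lemma ev_Z z w : ev z w (Zv C) = z. Proof. by rewrite evE /Zv hornerX hornerC. Qed.
Lemma ev_W z w : ev z w (Wv C) = w. Proof. by rewrite evE /Wv hornerC hornerX. Qed.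

Lemma natC_inj : injective (fun n : nat => (n%:R : C)).
Proof. by move=> m n /eqP; rewrite eqr_nat => /eqP. Qed.

Lemma ev_zero (p : bipoly C) : (forall z w, ev z w p = 0) -> p = 0.
Proof.
move=> h; apply: (@poly0_of_roots _ p (fun n => (n%:R)%:P)).
  by move=> m n /polyC_inj /natC_inj.
move=> n; apply: (@poly0_of_roots _ _ (fun n => n%:R)); first exact: natC_inj.
by move=> m; rewrite -evE.
Qed.

Lemma ev_eq (p q : bipoly C) : (forall z w, ev z w p = ev z w q) -> p = q.
Proof. by move=> h; apply/eqP; rewrite -subr_eq0; apply/eqP/ev_zero => z w; rewrite rmorphB h subrr. Qed.

Definition NF (n : nat) (T : nat -> nat -> C) : bipoly C :=
  \sum_(i < n) \sum_(j < n) cst (T i j) * Zv C ^+ i * Wv C ^+ j.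

Lemma ev_NF z w n T : ev z w (NF n T) = \sum_(i < n) \sum_(j < n) T i j * z ^+ i * w ^+ j.
Proof.
rewrite /NF rmorph_sum; apply: eq_bigr => i _; rewrite rmorph_sum; apply: eq_bigr => j _.
by rewrite !rmorphM !rmorphXn ev_cst ev_Z ev_W.
Qed.

Lemma NF_poly n T : NF n T = \poly_(i < n) \poly_(j < n) T i j.
Proof.
rewrite /NF poly_def; apply: eq_bigr => i _.
rewrite poly_def -mul_polyC rmorph_sum mulr_suml; apply: eq_bigr => j _.
rewrite -mul_polyC rmorphM /cst /Zv /Wv rmorphXn /=.
by rewrite mulrAC.
Qed.

Lemma NF_coef n T i j : ((NF n T)`_i)`_j = if ((i < n) && (j < n))%N then T i j else 0.
Proof.
rewrite NF_poly coef_poly; case: (i < n)%N => //=.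
by rewrite coef_poly.
by rewrite coef0.
Qed.

Lemma NF_eq n T U : NF n T = NF n U -> forall i j, (i < n)%N -> (j < n)%N -> T i j = U i j.
Proof. move=> e i j hi hj; have := NF_coef n T i j; rewrite e NF_coef hi hj /=. by []. Qed.

Lemma NF_dz n T : dz (NF n T) = NF n (fun i j => if (i.+1 < n)%N then T i.+1 j *+ i.+1 else 0).
Proof.
apply/polyP => i; apply/polyP => j.
rewrite /dz coef_deriv coefMn NF_coef NF_coef.
case: (ltnP i.+1 n) => hi.
  by rewrite (ltnW hi) /=; case: (j < n)%N; rewrite ?mul0rn.
by case: (i < n)%N; case: (j < n)%N; rewrite /= ?mul0rn.
Qed.

Lemma NF_dw n T : dw (NF n T) = NF n (fun i j => if (j.+1 < n)%N then T i j.+1 *+ j.+1 else 0).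
Proof.
apply/polyP => i; apply/polyP => j.
rewrite /dw coef_map_id0; last by rewrite deriv0.
rewrite coef_deriv NF_coef NF_coef.
case: (ltnP j.+1 n) => hj.
  by rewrite (ltnW hj) andbT /=; case: (i < n)%N; rewrite ?mul0rn.
by case: (i < n)%N; case: (j < n)%N; rewrite /= ?mul0rn.
Qed.

Definition Dt (a : coords C) (i j : nat) : C :=
  match i, j with
  | 0, 0 => a00 a | 0, 1 => a01 a | 0, 2 => a02 a
  | 1, 0 => a10 a | 1, 1 => a11 a | 1, 2 => a12 a
  | 2, 0 => a20 a | 2, 1 => a21 a | _, _ => 0 end.

Ltac pushm := rewrite ?(rmorph0, rmorph1, rmorphD, rmorphB, rmorphN, rmorphM, rmorphXn, rmorph_nat, ev_cst, ev_Z, ev_W).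
Ltac unroll := rewrite !big_ord_recr !big_ord0 /=.

Lemma ev_D z w a : ev z w (Dpol a) = Dg a z w.
Proof. rewrite /Dpol /Dg; pushm; ring. Qed.
Lemma ev_A z w a : ev z w (Apol a) = Ag a z w.
Proof. rewrite /Apol /Ag; pushm; ring. Qed.
Lemma ev_B z w a : ev z w (Bpol a) = Bg a z w.
Proof. rewrite /Bpol /Bg; pushm; ring. Qed.

Lemma Dpol_NF a : Dpol a = NF 3 (Dt a).
Proof. apply: ev_eq => z w; rewrite ev_D ev_NF /Dg; unroll; ring. Qed.

Lemma ev_Dz z w a : ev z w (dz (Dpol a)) = Dzg a z w.
Proof. rewrite Dpol_NF NF_dz ev_NF /Dzg; unroll; ring. Qed.
Lemma ev_Dw z w a : ev z w (dw (Dpol a)) = Dwg a z w.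
Proof. rewrite Dpol_NF NF_dw ev_NF /Dwg; unroll; ring. Qed.
Lemma ev_Dzz z w a : ev z w (dz (dz (Dpol a))) = Dzzg a z w.
Proof. rewrite Dpol_NF !NF_dz ev_NF /Dzzg; unroll; ring. Qed.
Lemma ev_Dww z w a : ev z w (dw (dw (Dpol a))) = Dwwg a z w.
Proof. rewrite Dpol_NF !NF_dw ev_NF /Dwwg; unroll; ring. Qed.

End Bi.

Section Push.
Variables (R1 R2 : comNzRingType) (f : {rmorphism R1 -> R2}).
Variables (A B D Dz Dw Dzz Dww : R1).
Lemma push_E1 : f (3%:R * A * D * Dww - 2%:R * A * B * Dz - 2%:R * A * Dw ^+ 2 + D * Dw * Dzz)
  = 3%:R * f A * f D * f Dww - 2%:R * f A * f B * f Dz - 2%:R * f A * f Dw ^+ 2 + f D * f Dw * f Dzz.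
Proof. rewrite !(rmorphD, rmorphN, rmorphB, rmorphM, rmorphXn, rmorph_nat) ?rmorph1; ring. Qed.
Lemma push_E2 : f (3%:R * B * D * Dzz - 2%:R * A * B * Dw - 2%:R * B * Dz ^+ 2 + D * Dz * Dww)
  = 3%:R * f B * f D * f Dzz - 2%:R * f A * f B * f Dw - 2%:R * f B * f Dz ^+ 2 + f D * f Dz * f Dww.
Proof. rewrite !(rmorphD, rmorphN, rmorphB, rmorphM, rmorphXn, rmorph_nat) ?rmorph1; ring. Qed.
Lemma push_E3 : f (2%:R * D ^+ 2 * Dzz * Dww - B * D * Dz * Dzz - A * D * Dw * Dww
        - A * B * Dz * Dw + A ^+ 2 * B ^+ 2)
  = 2%:R * f D ^+ 2 * f Dzz * f Dww - f B * f D * f Dz * f Dzz - f A * f D * f Dw * f Dww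
        - f A * f B * f Dz * f Dw + f A ^+ 2 * f B ^+ 2.
Proof. rewrite !(rmorphD, rmorphN, rmorphB, rmorphM, rmorphXn, rmorph_nat) ?rmorph1; ring. Qed.
End Push.

Lemma NF_zero (C : numClosedFieldType) n : NF n (fun _ _ => (0 : C)) = 0.
Proof. rewrite /NF; apply: big1 => i _; apply: big1 => j _; by rewrite /cst !rmorph0 !mul0r. Qed.

Section Bi2.
Variable C : numClosedFieldType.
Implicit Types (a : coords C) (z w : C).

Definition Tall a := forall i j, (i < 6)%N -> (j < 6)%N -> [/\ T1 a i j = 0, T2 a i j = 0 & T3 a i j = 0].

Lemma superint_iff a : superint a <-> Tall a.
Proof.
split.
- case=> h1 h2 h3 i j hi hj.
  have e1 : NF 6 (T1 a) = 0.
    apply: ev_zero => z w; move: (congr1 (ev z w) h1); rewrite push_E1 rmorph0.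
    rewrite ev_D ev_A ev_B ev_Dz ev_Dw ev_Dzz ev_Dww => e.
    by rewrite ev_NF -E1g_sum.
  have e2 : NF 6 (T2 a) = 0.
    apply: ev_zero => z w; move: (congr1 (ev z w) h2); rewrite push_E2 rmorph0.
    rewrite ev_D ev_A ev_B ev_Dz ev_Dw ev_Dzz ev_Dww => e.
    by rewrite ev_NF -E2g_sum.
  have e3 : NF 6 (T3 a) = 0.
    apply: ev_zero => z w; move: (congr1 (ev z w) h3); rewrite push_E3 rmorph0.
    rewrite ev_D ev_A ev_B ev_Dz ev_Dw ev_Dzz ev_Dww => e.
    by rewrite ev_NF -E3g_sum.
  have z0 := NF_zero C 6.
  split; [apply: (NF_eq (etrans e1 (esym z0))) | apply: (NF_eq (etrans e2 (esym z0))) | apply: (NF_eq (etrans e3 (esym z0)))] => //.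
- move=> h.
  have sum0 : forall T : nat -> nat -> C, (forall i j, (i < 6)%N -> (j < 6)%N -> T i j = 0) ->
     forall z w, \sum_(i < 6) \sum_(j < 6) T i j * z ^+ i * w ^+ j = 0.
    by move=> T hT z w; apply: big1 => i _; apply: big1 => j _; rewrite hT // !mul0r.
  split; apply: ev_zero => z w.
  + rewrite push_E1 ev_D ev_A ev_B ev_Dz ev_Dw ev_Dzz ev_Dww E1g_sum; apply: sum0 => i j hi hj; by case: (h i j hi hj).
  + rewrite push_E2 ev_D ev_A ev_B ev_Dz ev_Dw ev_Dzz ev_Dww E2g_sum; apply: sum0 => i j hi hj; by case: (h i j hi hj).
  + rewrite push_E3 ev_D ev_A ev_B ev_Dz ev_Dw ev_Dzz ev_Dww E3g_sum; apply: sum0 => i j hi hj; by case: (h i j hi hj).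
Qed.
End Bi2.

Section Bi3.
Variable C : numClosedFieldType.
Implicit Types (a : coords C) (z w : C).
Ltac pushm := rewrite ?(rmorph0, rmorph1, rmorphD, rmorphB, rmorphN, rmorphM, rmorphXn, rmorph_nat, ev_cst, ev_Z, ev_W).
Ltac unroll := rewrite !big_ord_recr !big_ord0 /=.

Definition At (a : coords C) (i j : nat) : C :=
  match i, j with
  | 0, 0 => a30 a | 0, 1 => 2%:R * a20 a | 0, 2 => a21 a | _, _ => 0 end.
Definition Bt (a : coords C) (i j : nat) : C :=
  match i, j with
  | 0, 0 => a03 a | 1, 0 => 2%:R * a02 a | 2, 0 => a12 a | _, _ => 0 end.

Lemma Apol_NF a : Apol a = NF 3 (At a).
Proof. apply: ev_eq => z w; rewrite ev_A ev_NF /Ag; unroll; ring. Qed.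
Lemma Bpol_NF a : Bpol a = NF 3 (Bt a).
Proof. apply: ev_eq => z w; rewrite ev_B ev_NF /Bg; unroll; ring. Qed.

Lemma DAB_coefs a D A B U V W : has_DAB a D A B -> D = NF 3 U -> A = NF 3 V -> B = NF 3 W ->
  forall i j, (i < 3)%N -> (j < 3)%N -> [/\ Dt a i j = U i j, At a i j = V i j & Bt a i j = W i j].
Proof.
case=> hD hA hB eD eA eB i j hi hj.
have e1 : NF 3 (Dt a) = NF 3 U by rewrite -Dpol_NF hD eD.
have e2 : NF 3 (At a) = NF 3 V by rewrite -Apol_NF hA eA.
have e3 : NF 3 (Bt a) = NF 3 W by rewrite -Bpol_NF hB eB.
split; [exact: (NF_eq e1 hi hj) | exact: (NF_eq e2 hi hj) | exact: (NF_eq e3 hi hj)].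
Qed.

Lemma T_conj a i j : [/\ T1 (conj_coords a) j i = T2 a i j, T2 (conj_coords a) j i = T1 a i j &
   T3 (conj_coords a) j i = T3 a i j].
Proof.
case: i => [|[|[|[|[|[|i]]]]]]; case: j => [|[|[|[|[|[|j]]]]]]; split; rewrite /=; try ring.
Qed.

Lemma Tall_conj a : Tall (conj_coords a) -> Tall a.
Proof.
move=> h i j hi hj; have [e1 e2 e3] := T_conj a i j; have [f1 f2 f3] := h j i hj hi.
by split; [rewrite -e2 | rewrite -e1 | rewrite -e3].
Qed.

Lemma plucker_conj a : plucker (conj_coords a) -> plucker a.
Proof.
case: a => x00 x01 x02 x03 x10 x11 x12 x20 x21 x30; rewrite /plucker /= => -[h1 h2 h3 h4 h5].
split; [rewrite -h5 | rewrite -h4 | rewrite -h3 | rewrite -h2 | rewrite -h1]; ring.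
Qed.

Lemma in_V_iff a : in_V a <-> plucker a /\ Tall a.
Proof. by rewrite /in_V superint_iff. Qed.

Lemma in_V_conj a : in_V (conj_coords a) -> in_V a.
Proof. by rewrite !in_V_iff => -[h1 h2]; split; [apply: plucker_conj | apply: Tall_conj]. Qed.

Lemma conjK a : conj_coords (conj_coords a) = a.
Proof. by case: a. Qed.

Lemma quad_roots (x y t : C) : x != 0 -> exists r1 r2, y = - x * (r1 + r2) /\ t = x * r1 * r2.
Proof.
move=> hx; set d := y ^+ 2 - 4%:R * x * t; set s := sqrtC d.
have hs : s ^+ 2 = d by rewrite sqrtCK.
have h2 : (2%:R : C) != 0 by rewrite pnatr_eq0.
exists ((- y + s) / (2%:R * x)), ((- y - s) / (2%:R * x)); split.
- by field.
- apply: (@mulfI _ (4%:R * x)); first by rewrite mulf_neq0 // pnatr_eq0.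
  have -> : 4%:R * x * (x * ((- y + s) / (2%:R * x)) * ((- y - s) / (2%:R * x))) = y ^+ 2 - s ^+ 2.
    by field.
  by rewrite hs /d; ring.
Qed.

Lemma sqrt_ex (x : C) : exists s, s ^+ 2 = x.
Proof. by exists (sqrtC x); rewrite sqrtCK. Qed.

End Bi3.

Ltac pushm := rewrite ?(rmorph0, rmorph1, rmorphD, rmorphB, rmorphN, rmorphM, rmorphXn, rmorph_nat, ev_cst, ev_Z, ev_W).
Ltac unroll := rewrite !big_ord_recr !big_ord0 /=.

Ltac ex1 H i j := generalize (H i j isT isT); move=> /= [? ? ?].
Ltac extract H :=
  ex1 H 0%N 0%N; ex1 H 0%N 1%N; ex1 H 0%N 2%N; ex1 H 1%N 0%N; ex1 H 1%N 1%N; ex1 H 1%N 2%N;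
  ex1 H 2%N 0%N; ex1 H 2%N 1%N; ex1 H 2%N 2%N; clear H.

Ltac sidec := try done; try (by repeat (apply/andP; split)).
Ltac enum_T := intros i j hi hj;
  destruct i as [|[|[|[|[|[|i]]]]]]; try (simpl in hi; discriminate);
  destruct j as [|[|[|[|[|[|j]]]]]]; try (simpl in hj; discriminate);
  rewrite /=; split; field; sidec.

Section Bwd.
Variable C : numClosedFieldType.

Definition Qw (x2 x1 x0 : C) (i j : nat) : C :=
  match i, j with 0, 0 => x0 | 0, 1 => 2%:R * x1 | 0, 2 => x2 | _, _ => 0 end.
Definition Qz (x2 x1 x0 : C) (i j : nat) : C :=
  match i, j with 0, 0 => x0 | 1, 0 => 2%:R * x1 | 2, 0 => x2 | _, _ => 0 end.

Definition U111 (a1 c1 a2 b2 c2 b3 c3 : C) (i j : nat) : C :=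
  match i, j with
  | 0, 0 => (c1 * c2 * c3)
  | 0, 1 => (c1 * b2 * c3) + (c1 * c2 * b3)
  | 0, 2 => (c1 * b2 * b3)
  | 1, 0 => (a1 * c2 * c3) + (c1 * a2 * c3)
  | 1, 1 => (a1 * b2 * c3) + (a1 * c2 * b3) + (c1 * a2 * b3)
  | 1, 2 => (a1 * b2 * b3)
  | 2, 0 => (a1 * a2 * c3)
  | 2, 1 => (a1 * a2 * b3)
  | _, _ => 0 end.
Definition U11b (a2 b2 c2 : C) (i j : nat) : C :=
  match i, j with
  | 0, 0 => (c2)
  | 0, 1 => (b2)
  | 1, 0 => (a2)
  | _, _ => 0 end.
Definition U1101 (a1 c1 a2 c2 b3 c3 : C) (i j : nat) : C :=
  match i, j with
  | 0, 0 => (c1 * c2 * c3)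
  | 0, 1 => (c1 * c2 * b3)
  | 1, 0 => (a1 * c2 * c3) + (c1 * a2 * c3)
  | 1, 1 => (a1 * c2 * b3) + (c1 * a2 * b3)
  | 2, 0 => (a1 * a2 * c3)
  | 2, 1 => (a1 * a2 * b3)
  | _, _ => 0 end.
Definition U1100 (a1 c1 a2 c2 : C) (i j : nat) : C :=
  match i, j with
  | 0, 0 => (c1 * c2)
  | 1, 0 => (a1 * c2) + (c1 * a2)
  | 2, 0 => (a1 * a2)
  | _, _ => 0 end.
Definition U0110 (a1 b1 c1 a3 b3 c3 : C) (i j : nat) : C :=
  match i, j with
  | 0, 0 => (c1 * c3)
  | 0, 1 => (c1 * b3) + (c3 * b1)
  | 0, 2 => (b3 * b1)
  | 1, 0 => (a1 * c3) + (c1 * a3)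
  | 1, 1 => (a1 * b3) + (b1 * a3)
  | 2, 0 => (a1 * a3)
  | _, _ => 0 end.

Lemma lin_solve (k x r : C) : k != 0 -> r - k * x = 0 -> x = r / k.
Proof. move=> hk /eqP; rewrite subr_eq0 => /eqP ->; by field. Qed.

Lemma bwd_1100 (a : coords C) : class_11_0_0 a -> in_V a.
Proof.
case=> a1 [c1 [a2 [c2 [t hDAB]]]].
have hD : (cst a1 * Zv C + cst c1) * (cst a2 * Zv C + cst c2) = NF 3 (U1100 a1 c1 a2 c2).
  by apply: ev_eq => z w; pushm; rewrite ev_NF; unroll; ring.
have hA : cst (2%:R * a1 * a2) * Wv C + cst t = NF 3 (Qw 0 (a1 * a2) t).
  by apply: ev_eq => z w; pushm; rewrite ev_NF; unroll; ring.
have H := DAB_coefs hDAB hD hA (esym (NF_zero C 3)).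
case: a H {hDAB} => x00 x01 x02 x03 x10 x11 x12 x20 x21 x30 H.
extract H. subst.
apply/in_V_iff; split; [rewrite /plucker /=; split; field; sidec | enum_T].
Qed.

Lemma bwd_1101 (a : coords C) : class_11_0_1 a -> in_V a.
Proof.
case=> a1 [c1 [a2 [c2 [b3 [c3 [hb3 hDAB]]]]]].
have hD : (cst a1 * Zv C + cst c1) * (cst a2 * Zv C + cst c2) * (cst b3 * Wv C + cst c3)
   = NF 3 (U1101 a1 c1 a2 c2 b3 c3).
  by apply: ev_eq => z w; pushm; rewrite ev_NF; unroll; ring.
have hA : cst (a1 * a2 / b3) * (cst b3 * Wv C + cst c3) ^+ 2
   = NF 3 (Qw (a1 * a2 / b3 * b3 ^+ 2) (a1 * a2 / b3 * b3 * c3) (a1 * a2 / b3 * c3 ^+ 2)).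
  by apply: ev_eq => z w; pushm; rewrite ev_NF; unroll; ring.
have H := DAB_coefs hDAB hD hA (esym (NF_zero C 3)).
case: a H {hDAB} => x00 x01 x02 x03 x10 x11 x12 x20 x21 x30 H.
extract H. subst.
apply/in_V_iff; split; [rewrite /plucker /=; split; field; sidec | enum_T].
Qed.

Lemma bwd_111a (a : coords C) a1 c1 a2 b2 c2 b3 c3 :
  a1 * b2 * c3 - a1 * c2 * b3 + c1 * a2 * b3 = 0 -> a1 != 0 -> b3 != 0 ->
  has_DAB a
        ((cst a1 * Zv C + cst c1) * (cst a2 * Zv C + cst b2 * Wv C + cst c2)
           * (cst b3 * Wv C + cst c3))
        (cst (a1 * a2 / b3) * (cst b3 * Wv C + cst c3) ^+ 2)
        (cst (b2 * b3 / a1) * (cst a1 * Zv C + cst c1) ^+ 2) -> in_V a.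
Proof.
move=> hc ha1 hb3 hDAB.
have hD : (cst a1 * Zv C + cst c1) * (cst a2 * Zv C + cst b2 * Wv C + cst c2) * (cst b3 * Wv C + cst c3)
   = NF 3 (U111 a1 c1 a2 b2 c2 b3 c3).
  by apply: ev_eq => z w; pushm; rewrite ev_NF; unroll; ring.
have hA : cst (a1 * a2 / b3) * (cst b3 * Wv C + cst c3) ^+ 2
   = NF 3 (Qw (a1 * a2 / b3 * b3 ^+ 2) (a1 * a2 / b3 * b3 * c3) (a1 * a2 / b3 * c3 ^+ 2)).
  by apply: ev_eq => z w; pushm; rewrite ev_NF; unroll; ring.
have hB : cst (b2 * b3 / a1) * (cst a1 * Zv C + cst c1) ^+ 2
   = NF 3 (Qz (b2 * b3 / a1 * a1 ^+ 2) (b2 * b3 / a1 * a1 * c1) (b2 * b3 / a1 * c1 ^+ 2)).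
  by apply: ev_eq => z w; pushm; rewrite ev_NF; unroll; ring.
have H := DAB_coefs hDAB hD hA hB.
have ec2 : c2 = (a1 * b2 * c3 + c1 * a2 * b3) / (a1 * b3).
  by apply: lin_solve; [rewrite mulf_neq0 | rewrite -hc; ring].
case: a H {hDAB} => x00 x01 x02 x03 x10 x11 x12 x20 x21 x30 H.
extract H. subst.
apply/in_V_iff; split; [rewrite /plucker /=; split; field; sidec | enum_T].
Qed.

Lemma bwd_111b (a : coords C) a2 b2 c2 : a2 != 0 -> b2 != 0 ->
  has_DAB a (cst a2 * Zv C + cst b2 * Wv C + cst c2)
        (cst (- (a2 ^+ 2 / b2))) (cst (- (b2 ^+ 2 / a2))) -> in_V a.
Proof.
move=> ha2 hb2 hDAB.
have hD : cst a2 * Zv C + cst b2 * Wv C + cst c2 = NF 3 (U11b a2 b2 c2).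
  by apply: ev_eq => z w; pushm; rewrite ev_NF; unroll; ring.
have hA : cst (- (a2 ^+ 2 / b2)) = NF 3 (Qw 0 0 (- (a2 ^+ 2 / b2))).
  by apply: ev_eq => z w; pushm; rewrite ev_NF; unroll; ring.
have hB : cst (- (b2 ^+ 2 / a2)) = NF 3 (Qz 0 0 (- (b2 ^+ 2 / a2))).
  by apply: ev_eq => z w; pushm; rewrite ev_NF; unroll; ring.
have H := DAB_coefs hDAB hD hA hB.
case: a H {hDAB} => x00 x01 x02 x03 x10 x11 x12 x20 x21 x30 H.
extract H. subst.
apply/in_V_iff; split; [rewrite /plucker /=; split; field; sidec | enum_T].
Qed.

Lemma bwd_0110 (a : coords C) : class_0_11_0 a -> in_V a.
Proof.
case=> a1 [b1 [c1 [a3 [b3 [c3 [hc hnz hDAB]]]]]].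
have hD : (cst a1 * Zv C + cst b1 * Wv C + cst c1) * (cst a3 * Zv C + cst b3 * Wv C + cst c3)
   = NF 3 (U0110 a1 b1 c1 a3 b3 c3).
  by apply: ev_eq => z w; pushm; rewrite ev_NF; unroll; ring.
have hA : cst (a1 * a3) * (cst 2%:R * Wv C + cst (c3 / b3 + c1 / b1))
   = NF 3 (Qw 0 (a1 * a3) (a1 * a3 * (c3 / b3 + c1 / b1))).
  by apply: ev_eq => z w; pushm; rewrite ev_NF; unroll; ring.
have hB : cst (b1 * b3) * (cst 2%:R * Zv C + cst (c3 / a3 + c1 / a1))
   = NF 3 (Qz 0 (b1 * b3) (b1 * b3 * (c3 / a3 + c1 / a1))).
  by apply: ev_eq => z w; pushm; rewrite ev_NF; unroll; ring.
have H := DAB_coefs hDAB hD hA hB.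
have [ha1 ha3 hb1 hb3] : [/\ a1 != 0, a3 != 0, b1 != 0 & b3 != 0].
  by move: hnz; rewrite !mulf_eq0 !negb_or => /andP[/andP[/andP[-> ->] ->] ->].
have ea1 : a1 = (- (b1 * a3)) / b3.
  apply: lin_solve => //; transitivity (- (a1 * b3 + b1 * a3)); [ring | by rewrite hc oppr0].
case: a H {hDAB} => x00 x01 x02 x03 x10 x11 x12 x20 x21 x30 H.
extract H. subst.
apply/in_V_iff; split; [rewrite /plucker /=; split; field; sidec | enum_T].
Qed.
End Bwd.

Ltac nz := rewrite ?mulf_neq0 ?expf_neq0 ?invr_neq0 ?oppr_eq0 ?pnatr_eq0 ?oner_eq0 //.
Ltac dab := split; apply: ev_eq => z w; rewrite ?ev_D ?ev_A ?ev_B; pushm;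
   rewrite /Dg /Ag /Bg /=; field; sidec.

Section Fwd.
Variable C : numClosedFieldType.

Lemma solve_from (k x v E : C) : k != 0 -> E = 0 -> E = k * (x - v) -> x = v.
Proof.
move=> hk hE hEq; apply/eqP; rewrite -subr_eq0; apply/eqP; apply: (mulfI hk).
by rewrite -hEq hE mulr0.
Qed.

Lemma zero_from (k x E : C) n : k != 0 -> E = 0 -> E = k * x ^+ n.+1 -> x = 0.
Proof.
move=> hk hE hEq; move: hE; rewrite hEq => /eqP; rewrite mulf_eq0 (negbTE hk) /= expf_eq0 /=.
by move/eqP.
Qed.

Lemma prod0 (k x y E : C) : k != 0 -> E = 0 -> E = k * (x * y) -> x = 0 \/ y = 0.
Proof.
move=> hk hE hEq; move: hE; rewrite hEq => /eqP; rewrite mulf_eq0 (negbTE hk) /= mulf_eq0.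
by case/orP => /eqP; [left|right].
Qed.

Lemma fwd_I (a : coords C) : in_V a -> a21 a != 0 -> a12 a != 0 -> class_111 a.
Proof.
rewrite in_V_iff; case: a => x00 x01 x02 x03 x10 x11 x12 x20 x21 x30 [].
rewrite /plucker /= => -[p1 p2 p3 p4 p5] ht h21 h12.
have [e _ _] := ht 4%N 0%N isT isT; rewrite /= in e.
have ex30 : x30 = x20 ^+ 2 / x21.
  by apply: (solve_from (k := - 2%:R * x21 ^+ 2) _ e); [nz | field; sidec].
have [e1 _ _] := ht 0%N 4%N isT isT; rewrite /= in e1.
have ex03 : x03 = x02 ^+ 2 / x12.
  by apply: (solve_from (k := - 2%:R * x12 * x21) _ e1); [nz | field; sidec].
have [e' _ _] := ht 2%N 3%N isT isT; rewrite /= in e'.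
have ex11 : x11 = (2%:R * x02 * x21 ^+ 2 + 2%:R * x12 ^+ 2 * x20) / (x12 * x21).
  by apply: (solve_from (k := 2%:R * x12 * x21) _ e'); [nz | field; sidec].
have ex10 : x10 = (x11 * x20 - x12 * x30) / x21.
  by apply: (solve_from (k := x21) _ p5); [nz | field; sidec].
have ex01 : x01 = (x02 * x11 - x03 * x21) / x12.
  by apply: (solve_from (k := x12) _ p1); [nz | field; sidec].
have ex00 : x00 = (x02 * x10 - x03 * x20) / x12.
  by apply: (solve_from (k := x12) _ p2); [nz | field; sidec].
clear e e1 e' p1 p2 p3 p4 p5 ht.
subst x00 x01 x10 x11 x03 x30.
left; exists 1, (x02 / x12), x21, x12, (x21 * x02 / x12 + x12 * x20 / x21), 1, (x20 / x21).
split; [field; sidec | exact: oner_neq0 | exact: oner_neq0 | dab].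
Qed.


Lemma fwd_II (a : coords C) : in_V a -> a21 a != 0 -> a12 a = 0 -> class_11_0_1 a.
Proof.
rewrite in_V_iff; case: a => x00 x01 x02 x03 x10 x11 x12 x20 x21 x30 [].
rewrite /plucker /= => -[p1 p2 p3 p4 p5] ht h21 h12; subst x12.
have [e _ _] := ht 4%N 0%N isT isT; rewrite /= in e.
have ex30 : x30 = x20 ^+ 2 / x21.
  by apply: (solve_from (k := - 2%:R * x21 ^+ 2) _ e); [nz | field; sidec].
have [e1 _ _] := ht 0%N 4%N isT isT; rewrite /= in e1.
have ex02 : x02 = 0.
  by apply: (zero_from (k := 2%:R * x21) (n := 1) _ e1); [nz | ring].
subst x02.
have ex03 : x03 = 0.
  by apply: (zero_from (k := x21) (n := 0) _ p1); [nz | ring].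
have ex00 : x00 = x01 * x20 / x21.
  by apply: (solve_from (k := x21) _ p4); [nz | field; sidec].
have ex10 : x10 = x11 * x20 / x21.
  by apply: (solve_from (k := x21) _ p5); [nz | field; sidec].
clear e e1 p1 p2 p3 p4 p5 ht.
subst x00 x10 x03 x30.
have [r1 [r2 [ex11 ex01]]] := quad_roots x11 x01 h21.
subst x11 x01.
exists x21, (- x21 * r1), 1, (- r2), 1, (x20 / x21).
split; [exact: oner_neq0 | dab].
Qed.

Lemma fwd_IVb2 (a : coords C) : in_V a -> a21 a = 0 -> a12 a = 0 -> a11 a = 0 ->
  a20 a != 0 -> a02 a = 0 -> class_11_0_0 a.
Proof.
rewrite in_V_iff; case: a => x00 x01 x02 x03 x10 x11 x12 x20 x21 x30 [].
rewrite /plucker /= => -[p1 p2 p3 p4 p5] ht h21 h12 h11 h20 h02; subst x21 x12 x11 x02.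
have ex03 : x03 = 0.
  by apply: (zero_from (k := x20) (n := 0) _ p2); [nz | ring].
have ex01 : x01 = 0.
  by apply: (zero_from (k := - x20) (n := 0) _ p4); [nz | ring].
subst x03 x01; clear p1 p2 p3 p4 p5 ht.
have [r1 [r2 [ex10 ex00]]] := quad_roots x10 x00 h20.
subst x10 x00.
exists x20, (- x20 * r1), 1, (- r2), x30.
dab.
Qed.
End Fwd.

Section Fwd2.
Variable C : numClosedFieldType.

Lemma n1C : (-1 : C) != 0.
Proof. by rewrite oppr_eq0 oner_eq0. Qed.

Lemma fwd_IV (a : coords C) : in_V a -> a21 a = 0 -> a12 a = 0 ->
   class_111 a \/ class_11_0_1 a \/ class_11_0_0 a \/ class_0_11_0 a \/
    class_1_0_11 a \/ class_0_0_11 a.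
Proof.
move=> hV; have := hV; rewrite in_V_iff.
case: a hV => x00 x01 x02 x03 x10 x11 x12 x20 x21 x30 hV [].
rewrite /plucker /= => -[p1 p2 p3 p4 p5] ht h21 h12; subst x21 x12.
have [h11|h11] := eqVneq x11 0.
- subst x11.
  have [h20|h20] := eqVneq x20 0.
  + subst x20.
    have [h02|h02] := eqVneq x02 0.
    * subst x02.
      have [h30|h30] := eqVneq x30 0.
      -- subst x30.
         have [_ e _] := ht 0%N 0%N isT isT; rewrite /= in e.
         have [h10|h10] := eqVneq x10 0.
         ++ subst x10. do 5 right.
            exists 0, 1, x01, x00, x03. dab.
         ++ have ex01 : x01 = 0.
              have [//|h] := prod0 (k := -1) (x := x01) (y := x10) n1C p3 ltac:(ring).
              by rewrite h eqxx in h10.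
            have ex03 : x03 = 0.
              by apply: (zero_from (k := - 2%:R * x10 ^+ 2) (n := 0) _ e); [nz | ring].
            subst x01 x03. do 2 right; left.
            exists 0, 1, x10, x00, 0. dab.
      -- have [e1 e2 _] := ht 0%N 0%N isT isT; rewrite /= in e1 e2.
         have f : x01 ^+ 2 + x03 * x10 = 0.
           by apply: (zero_from (k := - 2%:R * x30) (n := 0) _ e1); [nz | ring].
         have [h03|h03] := eqVneq x03 0.
         ++ subst x03.
            have ex01 : x01 = 0.
              by apply: (zero_from (k := 1) (n := 1) _ f); [nz | ring].
            subst x01. do 2 right; left.
            exists 0, 1, x10, x00, x30. dab.
         ++ have g : x01 * x30 + x10 ^+ 2 = 0.
              by apply: (zero_from (k := - 2%:R * x03) (n := 0) _ e2); [nz | ring].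
            have [h10|h10] := eqVneq x10 0.
            ** subst x10.
               have ex01 : x01 = 0.
                 by apply: (zero_from (k := 1) (n := 1) _ f); [nz | ring].
               subst x01.
               have [h|h] := prod0 (k := 1) (x := x03) (y := x30) (oner_neq0 _) p3 ltac:(ring).
               --- by rewrite h eqxx in h03.
               --- by rewrite h eqxx in h30.
            ** have ex03 : x03 = - x01 ^+ 2 / x10.
                 by apply: (solve_from (k := x10) _ f); [nz | field; sidec].
               have h01 : x01 != 0.
                 apply/negP => /eqP h01; move: h03; rewrite ex03 h01.
                 by rewrite expr0n /= oppr0 mul0r eqxx.
               have ex30 : x30 = - x10 ^+ 2 / x01.
                 by apply: (solve_from (k := x01) _ g); [nz | field; sidec].
               subst x03 x30. left; right.
               exists x10, x01, x00. split => //. dab.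
    * do 5 right; rewrite /class_0_0_11.
      apply: fwd_IVb2 => //=.
      by apply: in_V_conj; rewrite conjK.
  + have [h02|h02] := eqVneq x02 0.
    * subst x02. do 2 right; left.
      exact: fwd_IVb2.
    * have ex30 : x30 = x01 * x20 / x02.
        by apply: (solve_from (k := x02) _ p4); [nz | field; sidec].
      have ex03 : x03 = x02 * x10 / x20.
        by apply: (solve_from (k := x20) _ p2); [nz | field; sidec].
      have [e1 _ _] := ht 0%N 1%N isT isT; rewrite /= in e1.
      have ex00 : x00 = (x01 ^+ 2 * x20 + x02 * x10 ^+ 2) / (4%:R * x02 * x20).
        by apply: (solve_from (k := 16%:R * x02 * x20) _ e1); [nz | rewrite ex30 ex03; field; sidec].
      clear e1 p1 p2 p3 p4 p5 ht hV.
      subst x00 x30 x03.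
      have [s hs] := sqrt_ex (- x02 / x20).
      have hs0 : s != 0.
        apply/negP => /eqP h; move: hs; rewrite h expr0n /= => /esym /eqP.
        by rewrite mulf_eq0 oppr_eq0 invr_eq0 (negbTE h02) (negbTE h20).
      have ex02 : x02 = - s ^+ 2 * x20.
        by rewrite hs; field; sidec.
      clear hs; subst x02.
      do 3 right; left.
      exists 1, s, ((x10 - x01 / s) / (2%:R * x20)), x20, (- s * x20), ((x10 + x01 / s) / 2%:R).
      split; [ring | nz | dab].
- have ex02 : x02 = 0.
    have [//|h] := prod0 (k := -1) (x := x02) (y := x11) n1C p1 ltac:(ring).
    by rewrite h eqxx in h11.
  have ex20 : x20 = 0.
    have [h|//] := prod0 (k := -1) (x := x11) (y := x20) n1C p5 ltac:(ring).
    by rewrite h eqxx in h11.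
  subst x02 x20.
  have [e _ _] := ht 2%N 0%N isT isT; rewrite /= in e.
  have [_ e' _] := ht 0%N 2%N isT isT; rewrite /= in e'.
  have ex30 : x30 = 0.
    by apply: (zero_from (k := - 2%:R * x11 ^+ 2) (n := 0) _ e); [nz | ring].
  have ex03 : x03 = 0.
    by apply: (zero_from (k := - 2%:R * x11 ^+ 2) (n := 0) _ e'); [nz | ring].
  subst x30 x03.
  have ex00 : x00 = x01 * x10 / x11.
    by apply: (solve_from (k := x11) _ p3); [nz | field; sidec].
  subst x00. right; left.
  exists x11, x01, 0, 1, 1, (x10 / x11).
  split; [exact: oner_neq0 | dab].
Qed.
End Fwd2.

Lemma main_gen (C : numClosedFieldType) (a : coords C) :
  (in_V a <->
   (class_111 a \/ class_11_0_1 a \/ class_11_0_0 a \/ class_0_11_0 a \/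
    class_1_0_11 a \/ class_0_0_11 a)).
Proof.
split.
- move=> hV.
  have [h21|h21] := eqVneq (a21 a) 0; have [h12|h12] := eqVneq (a12 a) 0.
  + exact: fwd_IV.
  + do 4 right; left; rewrite /class_1_0_11.
    apply: fwd_II => //=; by apply: in_V_conj; rewrite conjK.
  + right; left; exact: fwd_II.
  + left; exact: fwd_I.
- case=> [[[a1 [c1 [a2 [b2 [c2 [b3 [c3 [hc ha hb hD]]]]]]]] | [a2 [b2 [c2 [ha hb hD]]]]] |
         [h|[h|[h|[h|h]]]]].
  + exact: bwd_111a hc ha hb hD.
  + exact: bwd_111b ha hb hD.
  + exact: bwd_1101.
  + exact: bwd_1100.
  + exact: bwd_0110.
  + by apply: in_V_conj; apply: bwd_1101.
  + by apply: in_V_conj; apply: bwd_1100.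
Qed.

Unset Implicit Arguments.
Theorem theorem4p5 (R : realType) (a : coords R[i]) :
  nonzero_coords a ->
  (in_V a <->
   (class_111 a \/ class_11_0_1 a \/ class_11_0_0 a \/ class_0_11_0 a \/
    class_1_0_11 a \/ class_0_0_11 a)).
Proof. move=> _; exact: (@main_gen R[i] a). Qed.
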